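(* Let $(X,\Psi)$ be a $\sigma$-compact uniform space and $Y\subseteq X$. The following are equivalent: (1) $(X,\Psi)$ satisfies $\textsf{S}_1(\mathcal{O}_\Psi,\mathcal{O}_Y)$; (2) $(X,\Psi)$ satisfies $\textsf{S}_1(\mathcal{O},\mathcal{O}_Y)$; (3) ONE has no winning strategy in the game ${\sf G}_1(\mathcal{O},\mathcal{O}_Y)$; (4) ONE has no winning strategy in the game ${\sf G}_1(\mathcal{O}_\Psi,\mathcal{O}_Y)$.
   Context: A uniformity on $X$ is a filter $\Psi$ on $X\times X$ whose members contain the diagonal $\Delta_X$, closed under $U\mapsto U^{-1}$, such that for each $U\in\Psi$ there is $V\in\Psi$ with $V\circ V\subseteq U$, and with $\bigcap\Psi=\Delta_X$. $U(x)=\{y:(x,y)\in U\}$; $X$ has the topology with neighbourhood bases $\{U(x):U\in\Psi\}$. $\sigma$-compact: countable union of compact subsets. $\mathcal{O}$: open covers of $X$. For $N\in\Psi$, $\mathcal{O}(N)=\{\mathrm{Int}(N(x)):x\in X\}$, $\mathcal{O}_\Psi=\{\mathcal{O}(N):N\in\Psi\}$. $\mathcal{O}_Y$: families of open subsets of $X$ whose union contains $Y$. $\textsf{S}_1(\mathcal{A},\mathcal{B})$: for every sequence $(O_n)$ of elements of $\mathcal{A}$ there are $T_n\in O_n$ with $\{T_n:n\in\mathbb{N}\}\in\mathcal{B}$. Game ${\sf G}_1(\mathcal{A},\mathcal{B})$: in inning $n$ ONE chooses $O_n\in\mathcal{A}$, TWO responds with $T_n\in O_n$; TWO wins if $\{T_n:n\in\mathbb{N}\}\in\mathcal{B}$,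 else ONE wins. *)

(* Defs.v *)
From Stdlib Require List.
From mathcomp Require Import all_boot.
From mathcomp Require Export classical_sets.
Set Implicit Arguments. Unset Strict Implicit. Unset Printing Implicit Defensive.
Local Open Scope classical_set_scope.

Section Uniform.
Variable X : Type.
Implicit Types (Psi : set (set (X * X))) (U V N : set (X * X)) (A B : set X).

Definition is_uniformity Psi : Prop :=
  Psi setT /\
  (forall U V, Psi U -> Psi V -> Psi (setI U V)) /\
  (forall U V, Psi U -> U `<=` V -> Psi V) /\
  (forall U, Psi U -> forall x, U (x, x)) /\
  (forall U, Psi U -> Psi [set p | U (p.2, p.1)]) /\
  (forall U, Psi U -> exists2 V, Psi V &
      (forall x y z, V (x, y) -> V (y, z) -> U (x, z))) /\
  (forall x y, (forall U, Psi U -> U (x, y)) -> x = y).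

Definition entsec U (x : X) : set X := [set y | U (x, y)].

Definition uopen Psi A : Prop :=
  forall x, A x -> exists2 U, Psi U & entsec U x `<=` A.

Definition uint Psi A : set X :=
  [set x | exists B, [/\ uopen Psi B, B `<=` A & B x]].

Definition ucompact Psi (K : set X) : Prop :=
  forall F : set (set X), (forall G, F G -> uopen Psi G) ->
    (forall x, K x -> exists2 G, F G & G x) ->
    exists s : seq (set X), (forall G, List.In G s -> F G) /\
      (forall x, K x -> exists2 G, List.In G s & G x).

Definition sigma_compact Psi : Prop :=
  exists K : nat -> set X, (forall n, ucompact Psi (K n)) /\
    (forall x, exists n, K n x).

Definition OpenCovers Psi : set (set (set X)) :=
  [set F | (forall G, F G -> uopen Psi G) /\ (forall x, exists2 G, F G & G x)].

Definition OpenCoversOf Psi (Y : set X) : set (set (set X)) :=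
  [set F | (forall G, F G -> uopen Psi G) /\ (forall x, Y x -> exists2 G, F G & G x)].

Definition OofN Psi N : set (set X) := [set G | exists x, G = uint Psi (entsec N x)].

Definition OPsi Psi : set (set (set X)) := [set F | exists2 N, Psi N & F = OofN Psi N].

Definition S1 (AA BB : set (set (set X))) : Prop :=
  forall O : nat -> set (set X), (forall n, AA (O n)) ->
    exists T : nat -> set X, (forall n, O n (T n)) /\ BB (range T).

(* A strategy for ONE in G_1(A,B): given TWO's previous moves, choose an element of A.
   It is winning if every play following it is lost by TWO. *)
Definition ONE_winning_strategy (AA BB : set (set (set X)))
    (sigma : seq (set X) -> set (set X)) : Prop :=
  (forall h, AA (sigma h)) /\
  (forall T : nat -> set X,
      (forall n, sigma [seq T i | i <- iota 0 n] (T n)) -> ~ BB (range T)).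

Definition ONE_has_winning_strategy (AA BB : set (set (set X))) : Prop :=
  exists sigma, ONE_winning_strategy AA BB sigma.

End Uniform.

(* Main.v *)
Require Import Defs.
From mathcomp Require Import all_boot classical_sets boolp.
From Stdlib Require Import Cantor Lia.
Local Open Scope classical_set_scope.
Set Implicit Arguments.

Section S.
Variable X : Type.
Variable Psi : set (set (X * X)).
Hypothesis HU : is_uniformity Psi.

Lemma PsiT : Psi setT. Proof. by case: HU. Qed.
Lemma PsiI U V : Psi U -> Psi V -> Psi (U `&` V). Proof. by case: HU => _ [H] _; apply: H. Qed.
Lemma PsiS U V : Psi U -> U `<=` V -> Psi V. Proof. by case: HU => _ [_ [H]] _; apply: H. Qed.
Lemma Psirefl U : Psi U -> forall x, U (x, x). Proof. by case: HU => _ [_ [_ [H]]] _; apply: H. Qed.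
Lemma Psiinv U : Psi U -> Psi [set p | U (p.2, p.1)]. Proof. by case: HU => _ [_ [_ [_ [H]]]] _; apply: H. Qed.
Lemma Psihalf U : Psi U -> exists2 V, Psi V & (forall x y z, V (x, y) -> V (y, z) -> U (x, z)).
Proof. by case: HU => _ [_ [_ [_ [_ [H]]]]] _; apply: H. Qed.

Lemma Psithird W : Psi W -> exists2 V, Psi V &
  (forall a b c d, V (a, b) -> V (b, c) -> V (c, d) -> W (a, d)).
Proof.
move=> /Psihalf [V1 PV1 H1]; have [V2 PV2 H2] := Psihalf PV1.
exists V2 => // a b c d ab bc cd; apply: (H1 a c d); first exact: (H2 a b c).
by apply: (H2 c d d) => //; apply: Psirefl.
Qed.

Definition kern (A : set X) := [set y | exists2 U, Psi U & entsec U y `<=` A].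

Lemma kern_open A : uopen Psi (kern A).
Proof.
move=> y [U PU HU']; have [V PV HV] := Psihalf PU.
exists V => // y' Vy'; exists V => // z Vz; apply: HU'; exact: (HV y y' z).
Qed.

Lemma kern_sub A : kern A `<=` A.
Proof. by move=> y [U PU H]; apply: H; apply: Psirefl. Qed.

Lemma kern_self U x : Psi U -> kern (entsec U x) x.
Proof. by move=> PU; exists U. Qed.

Lemma uint_open A : uopen Psi (uint Psi A).
Proof.
move=> x [B [oB BA Bx]]; have [U PU HU'] := oB x Bx.
by exists U => // y /HU' By; exists B.
Qed.

Lemma uint_sub A : uint Psi A `<=` A.
Proof. by move=> x [B [_ BA Bx]]; apply: BA. Qed.

Lemma uint_self U x : Psi U -> uint Psi (entsec U x) x.
Proof. move=> PU; exists (kern (entsec U x)); split; [exact: kern_open|exact: kern_sub|exact: kern_self]. Qed.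


Lemma lebesgue (C : set X) (A : set (set X)) :
  ucompact Psi C -> (forall G, A G -> uopen Psi G) ->
  (forall z, C z -> exists2 G, A G & G z) ->
  exists V : set (X * X), exists L : seq (set X), [/\ Psi V,
    (forall G, List.In G L -> A G) &
    (forall z x, C z -> V (x, z) -> exists G, List.In G L /\ entsec V x `<=` G)].
Proof.
move=> cC oA cov.
have : forall z, exists p : set X * set (X * X), C z ->
   [/\ A p.1, Psi p.2 & forall b c d, p.2 (z, b) -> p.2 (b, c) -> p.2 (c, d) -> p.1 d].
  move=> z; have [Cz|nCz] := pselect (C z); last by exists (setT, setT).
  have [G AG Gz] := cov z Cz; have [W PW HW] := oA G AG z Gz.
  have [V PV HV] := Psithird PW.
  exists (G, V) => _; split => // b c d zb bc cd; apply: HW; exact: (HV z b c d).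
move=> /choice [p Hp].
pose B z := kern (entsec (p z).2 z).
have [s [sF scov]] := cC [set D | exists z, C z /\ D = B z]
  ltac:(by move=> D [z [_ ->]]; apply: kern_open)
  ltac:(move=> z Cz; exists (B z); [by exists z|]; by have [_ Pz _] := Hp z Cz; apply: kern_self).
suff [V [L [PV LA HV]]] : exists V : set (X * X), exists L : seq (set X), [/\ Psi V,
    (forall G, List.In G L -> A G) &
    (forall z x, (exists2 D, List.In D s & D z) -> V (x, z) -> exists G, List.In G L /\ entsec V x `<=` G)].
  by exists V, L; split => // z x /scov; apply: HV.
elim: s sF {scov} => [|D s IH] sF.
  by exists setT, [::]; split => //; [exact: PsiT| by move=> z x [D]].
have [z [Cz ->]] := sF D (or_introl erefl).
have [V [L [PV LA HV]]] := IH (fun G h => sF G (or_intror h)).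
have [Az Pz Hz] := Hp z Cz.
pose W := (p z).2 `&` [set q | (p z).2 (q.2, q.1)].
exists (V `&` W), ((p z).1 :: L); split.
- by apply: PsiI => //; apply: PsiI => //; apply: Psiinv.
- by move=> G [<-|/LA].
move=> z' x [D' [<-|inD] D'z'] [Vxz' Wxz'].
  exists (p z).1; split; first by left.
  move=> y [_ [Wxy _]]; apply: (Hz z' x y); [|exact: Wxz'.2|exact: Wxy].
  by move: D'z' => [U PU HUU]; apply: HUU; apply: Psirefl.
have [G [inG HG]] := HV z' x (ex_intro2 _ _ D' inD D'z') Vxz'.
by exists G; split; [right|move=> y [Vy _]; apply: HG].
Qed.
End S.

Lemma compactU X Psi (K K' : set X) : ucompact Psi K -> ucompact Psi K' -> ucompact Psi (K `|` K').
Proof.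
move=> cK cK' F oF cov.
have [s [sF scov]] := cK F oF (fun x Kx => cov x (or_introl Kx)).
have [s' [sF' scov']] := cK' F oF (fun x Kx => cov x (or_intror Kx)).
exists (s ++ s'); split.
  by move=> G H; case: (List.in_app_or _ _ _ H) => H1; [apply: sF|apply: sF'].
move=> x [/scov|/scov'] [G inG Gx]; exists G => //; apply: List.in_or_app; by [left|right].
Qed.

Lemma notS1_win X (AA BB : set (set (set X))) :
  ~ ONE_has_winning_strategy AA BB -> S1 AA BB.
Proof.
move=> NW O AO; apply: contrapT => NS; apply: NW.
exists (fun h => O (size h)); split => // T HT BT; apply: NS; exists T; split => // n.
by move: (HT n); rewrite size_map size_iota.
Qed.

Fixpoint histf A (mv : nat -> seq A -> A) n : seq A :=
  if n is n'.+1 then rcons (histf mv n') (mv n' (histf mv n')) else [::].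

Lemma histfE A (mv : nat -> seq A -> A) n :
  histf mv n = [seq mv i (histf mv i) | i <- iota 0 n].
Proof.
elim: n => [//|n IH]; rewrite [LHS]/= -addn1 iotaD map_cat /= cats1 -IH.
by [].
Qed.

Lemma size_histf A (mv : nat -> seq A -> A) n : size (histf mv n) = n.
Proof. by elim: n => //= n IH; rewrite size_rcons IH. Qed.

Fixpoint Cf X (K : nat -> set X) n : set X :=
  if n is m.+1 then Cf K m `|` K m.+1 else K 0.

Lemma Cf_compact X Psi (K : nat -> set X) : (forall n, ucompact Psi (K n)) ->
  forall n, ucompact Psi (Cf K n).
Proof. by move=> cK; elim=> [|n IH] //=; apply: compactU. Qed.

Lemma Cf_sub X (K : nat -> set X) m n : (m <= n)%N -> K m `<=` Cf K n.
Proof.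
elim: n => [|n IH]; first by rewrite leqn0 => /eqP ->.
rewrite leq_eqVlt => /orP [/eqP -> | ]; first by move=> x Kx; right.
by rewrite ltnS => /IH H x /H Cx; left.
Qed.

Fixpoint levf A (F : seq A -> seq A) n : seq (seq A) :=
  if n is m.+1 then List.flat_map (fun h => map (fun G => rcons h G) (F h)) (levf F m)
  else [:: [::]].

Lemma foldI_Psi X (Psi : set (set (X * X))) B (f : B -> set (X * X)) (l : seq B) :
  is_uniformity Psi -> (forall b, Psi (f b)) -> Psi (foldr setI setT (map f l)).
Proof.
move=> HU Pf; elim: l => [|b l IH] /=; first exact: PsiT.
exact: PsiI.
Qed.

Lemma foldI_sub X B (f : B -> set (X * X)) (l : seq B) b :
  List.In b l -> foldr setI setT (map f l) `<=` f b.
Proof.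
elim: l => [//|b' l IH] /= [->|/IH H] p []; first by [].
by move=> _ /H.
Qed.

Lemma In_map_ssr A B (f : A -> B) (l : seq A) x : List.In x l -> List.In (f x) (map f l).
Proof. by elim: l => [//|a l IH] /= [->|/IH]; [left|right]. Qed.

Lemma hard X Psi (Y : set X) : is_uniformity Psi -> sigma_compact Psi ->
  S1 (OPsi Psi) (OpenCoversOf Psi Y) ->
  ~ ONE_has_winning_strategy (OpenCovers Psi) (OpenCoversOf Psi Y).
Proof.
move=> HU [K [cK covK]] HS [sg [sgO sgW]].
have [x0 _] : exists x : X, True.
  have [T [HT _]] := HS (fun _ => OofN Psi setT)
    (fun _ => ex_intro2 _ _ setT (PsiT HU) erefl).
  by have [x _] := HT 0; exists x.
have : forall h, exists G, sg h G /\ G x0.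
  by move=> h; have [G ? ?] := (sgO h).2 x0; exists G.
move=> /choice [dflt Hdflt].
have : forall h : seq (set X), exists p : set (X * X) * seq (set X),
  [/\ Psi p.1, forall G, List.In G p.2 -> sg h G &
      forall z x, Cf K (size h) z -> p.1 (x, z) ->
        exists G, List.In G p.2 /\ entsec p.1 x `<=` G].
  move=> h; have [V [L [? ? ?]]] := @lebesgue X Psi HU _ (sg h) (@Cf_compact X Psi K cK (size h))
    (sgO h).1 (fun z _ => (sgO h).2 z).
  by exists (V, L).
move=> /choice [LB HLB].
pose F' h := dflt h :: (LB h).2.
have F'sg h G : List.In G (F' h) -> sg h G.
  by move=> [<-|H]; [exact: (Hdflt h).1| case: (HLB h) => _ Hs _; apply: Hs].
pose NN n := foldr setI setT (map (fun h => (LB h).1) (levf F' n)).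
have PNN n : Psi (NN n) by apply: foldI_Psi => // h; case: (HLB h).
have : forall j, exists T : nat -> set X,
    (forall i, OofN Psi (NN (Cantor.to_nat (j, i))) (T i)) /\
    OpenCoversOf Psi Y (range T).
  by move=> j; apply: (HS (fun i => OofN Psi (NN (Cantor.to_nat (j, i))))) => i; exists (NN (Cantor.to_nat (j, i))).
move=> /choice [TT HTT].
pose T' n := TT (Cantor.of_nat n).1 (Cantor.of_nat n).2.
have T'O n : OofN Psi (NN n) (T' n).
  rewrite /T' -[in NN n](Cantor.cancel_to_of n).
  by case: (Cantor.of_nat n) => j i; apply: (HTT j).1.
have T'cov y : Y y -> forall j, exists n, (j <= n)%N /\ T' n y.
  move=> Yy j; have [G [i _ <-] Gy] := (HTT j).2.2 y Yy.
  exists (Cantor.to_nat (j, i)); split; last by rewrite /T' Cantor.cancel_of_to.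
  apply/leP; have := Cantor.to_nat_non_decreasing j i; lia.
have : forall p : nat * seq (set X), exists G, List.In G (F' p.2) /\
   ((exists G', List.In G' (F' p.2) /\ (T' p.1 `&` Cf K p.1 `<=` G')) ->
    T' p.1 `&` Cf K p.1 `<=` G).
  move=> [n h]; have [[G' [H1 H2]]|N] := pselect (exists G', List.In G' (F' h) /\
      (T' n `&` Cf K n `<=` G')).
    by exists G'.
  by exists (dflt h); split; [left|].
move=> /choice [mv0 Hmv].
pose mv n h := mv0 (n, h).
pose hist := histf mv.
pose T n := mv n (hist n).
have histlev n : List.In (hist n) (levf F' n).
  elim: n => [|n IH]; first by left.
  rewrite /hist /=; apply/List.in_flat_map; exists (hist n); split => //.
  exact: (@In_map_ssr _ _ (fun G => rcons (hist n) G) _ _ (Hmv (n, hist n)).1).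
apply: (sgW T).
  move=> n; rewrite -histfE; apply: F'sg; exact: (Hmv (n, hist n)).1.
split.
  by move=> G [n _ <-]; apply: (sgO _).1; apply: F'sg; exact: (Hmv (n, hist n)).1.
move=> y Yy; have [m Km] := covK y.
have [n [mn T'y]] := T'cov y Yy m.
have Cy : Cf K n y by exact: (@Cf_sub X K m n mn y Km).
have [x Ex] := T'O n.
have sub1 : T' n `<=` entsec ((LB (hist n)).1) x.
  move=> w; rewrite Ex => Tw; have Hw : NN n (x, w) := uint_sub Tw; exact: (@foldI_sub X _ (fun h => (LB h).1) _ _ (histlev n) (x, w) Hw).
have [_ _ HL] := HLB (hist n).
have [G [inG HG]] := HL y x ltac:(by rewrite size_histf) (sub1 y T'y).
exists (T n); first by exists n.
apply: (Hmv (n, hist n)).2; last by split.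
exists G; split; first by right.
by move=> w [/sub1 /HG].
Qed.
Unset Implicit Arguments.

Lemma OPsi_sub X (Psi : set (set (X * X))) : is_uniformity Psi -> OPsi Psi `<=` OpenCovers Psi.
Proof.
move=> HU F [N PN ->]; split.
  by move=> G [x ->]; apply: uint_open.
by move=> x; exists (uint Psi (entsec N x)); [exists x|apply: uint_self].
Qed.

Lemma S1_mono X (AA AA' BB : set (set (set X))) : AA' `<=` AA -> S1 AA BB -> S1 AA' BB.
Proof. by move=> sub H O HO; apply: H => n; apply: sub. Qed.

Lemma win_mono X (AA AA' BB : set (set (set X))) : AA' `<=` AA ->
  ONE_has_winning_strategy AA' BB -> ONE_has_winning_strategy AA BB.
Proof. by move=> sub [sg [H1 H2]]; exists sg; split => // h; apply: sub. Qed.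

Theorem theorem2p5 (X : Type) (Psi : set (set (X * X))) (Y : set X) :
  is_uniformity Psi -> sigma_compact Psi ->
  let s1 := S1 (OPsi Psi) (OpenCoversOf Psi Y) in
  let s2 := S1 (OpenCovers Psi) (OpenCoversOf Psi Y) in
  let s3 := ~ ONE_has_winning_strategy (OpenCovers Psi) (OpenCoversOf Psi Y) in
  let s4 := ~ ONE_has_winning_strategy (OPsi Psi) (OpenCoversOf Psi Y) in
  [/\ s1 <-> s2, s2 <-> s3 & s3 <-> s4].
Proof.
move=> HU HS s1 s2 s3 s4.
have sub := OPsi_sub X Psi HU.
have h13 : s1 -> s3 := @hard X Psi Y HU HS.
have h32 : s3 -> s2 := @notS1_win _ _ _.
have h21 : s2 -> s1 := S1_mono X _ _ _ sub.
have h34 : s3 -> s4 := fun H W => H (win_mono X _ _ _ sub W).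
have h41 : s4 -> s1 := @notS1_win _ _ _.
by split; split; auto.
Qed.
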